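(* We have $\det(A)\neq0$ if and only if condition (C3) holds and $A\neq0$. If $\det(A)\ne0$ and $\int_{\mathbb{R}^d}|x|^2N(dx)<\infty$, then (C3) holds with $T_3=\infty$.
   Context: $Y$ is a Lévy process in $\mathbb{R}^d$ with generating triplet $(A,N,b)$ ($A$ symmetric non-negative definite $d\times d$ matrix, $b\in\mathbb{R}^d$, $N$ Lévy measure), characteristic exponent $\Psi$ ($\mathbb{E}e^{i\langle x,Y_t\rangle}=e^{-t\Psi(x)}$), $\Psi^*(r)=\sup_{|z|\le r}\mathrm{Re}\,\Psi(z)$. Standing assumption: $h(0^+)=\infty$ where $h(r)=r^{-2}\|A\|+\int(1\wedge|x|^2/r^2)N(dx)$. Condition (C3): there are $T_3\in(0,\infty]$, $c_3\in(0,1]$, $\alpha_3\in(0,2]$ such that $c_3\Psi^*(|x|)\le\mathrm{Re}\Psi(x)$ for all $|x|>1/T_3$, and $\Psi^*(\lambda r)\ge c_3\lambda^{\alpha_3}\Psi^*(r)$ for all $\lambda\ge1$, $r>1/T_3$ (with $1/\infty=0$). *)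

(* Defs.v *)
From HB Require Import structures.
From mathcomp Require Import all_boot all_order all_algebra.
From mathcomp Require Import all_classical all_reals all_analysis.
Set Implicit Arguments. Unset Strict Implicit. Unset Printing Implicit Defensive.
Import Order.TTheory GRing.Theory Num.Theory.
Import numFieldNormedType.Exports.
Local Open Scope classical_set_scope.
Local Open Scope ring_scope.

Section LevyDefs.
Variables (R : realType) (d : nat).

Definition Rd : Type := g_sigma_algebraType (@open 'rV[R]_d).

Definition inner (x y : 'rV[R]_d) : R := (x *m y^T) 0 0.
Definition enorm (x : 'rV[R]_d) : R := Num.sqrt (inner x x).

Definition opnorm (A : 'M[R]_d) : R :=
  sup [set enorm (z *m A) | z in [set z : 'rV[R]_d | enorm z <= 1]].

Definition quad (A : 'M[R]_d) (x : 'rV[R]_d) : R := (x *m A *m x^T) 0 0.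

Definition symmetric_nnd (A : 'M[R]_d) : Prop :=
  A^T = A /\ forall x : 'rV[R]_d, 0 <= quad A x.

Definition levy_measure (N : {measure set Rd -> \bar R}) : Prop :=
  N [set (0 : 'rV[R]_d)] = 0%E /\
  (\int[N]_(y in [set: Rd]) (Num.min 1 (enorm y ^+ 2))%:E < +oo)%E.

(* The characteristic exponent Psi of the Levy process with triplet (A,N,b)
   (Levy-Khintchine formula, E e^{i<x,Y_t>} = e^{-t Psi(x)}), given by its
   real and imaginary parts:
   Psi(x) = 1/2 <x,Ax> - i<b,x> + int (1 - e^{i<x,y>} + i<x,y> 1_{|y|<1}) N(dy). *)
Definition RePsi (A : 'M[R]_d) (N : {measure set Rd -> \bar R}) (x : 'rV[R]_d) : R :=
  quad A x / 2 + fine (\int[N]_(y in [set: Rd]) (1 - cos (inner x y))%:E).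

Definition ImPsi (N : {measure set Rd -> \bar R}) (b x : 'rV[R]_d) : R :=
  - inner b x + fine (\int[N]_(y in [set: Rd])
      ((if enorm y < 1 then inner x y else 0) - sin (inner x y))%:E).

Definition Psi (A : 'M[R]_d) (N : {measure set Rd -> \bar R}) (b x : 'rV[R]_d)
  : R * R := (RePsi A N x, ImPsi N b x).

Definition Psistar (A : 'M[R]_d) (N : {measure set Rd -> \bar R}) (r : R) : R :=
  sup [set RePsi A N z | z in [set z : 'rV[R]_d | enorm z <= r]].

Definition hfun (A : 'M[R]_d) (N : {measure set Rd -> \bar R}) (r : R) : \bar R :=
  ((opnorm A / r ^+ 2)%:E +
   \int[N]_(y in [set: Rd]) (Num.min 1 (enorm y ^+ 2 / r ^+ 2))%:E)%E.

Definition standing (A : 'M[R]_d) (N : {measure set Rd -> \bar R}) : Prop :=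
  hfun A N r @[r --> 0^'+] --> +oo%E.

(* "r > 1/T" with the convention 1/oo = 0 (T in (0, oo]) *)
Definition gt_inv (T : \bar R) (r : R) : Prop :=
  match T with
  | EFin t => t^-1 < r
  | _ => 0 < r
  end.

Definition C3_with (A : 'M[R]_d) (N : {measure set Rd -> \bar R}) (T3 : \bar R)
  : Prop :=
  (0 < T3)%E /\
  exists (c3 alpha3 : R),
    [/\ 0 < c3 <= 1, 0 < alpha3 <= 2,
     (forall x : 'rV[R]_d, gt_inv T3 (enorm x) ->
        c3 * Psistar A N (enorm x) <= RePsi A N x) &
     (forall lam r : R, 1 <= lam -> gt_inv T3 r ->
        c3 * lam `^ alpha3 * Psistar A N r <= Psistar A N (lam * r))].

Definition C3 (A : 'M[R]_d) (N : {measure set Rd -> \bar R}) : Prop :=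
  exists T3 : \bar R, C3_with A N T3.

End LevyDefs.
Arguments Rd : clear implicits.

(* Main.v *)
Require Import Defs.
From HB Require Import structures.
From mathcomp Require Import all_boot all_order all_algebra.
From mathcomp Require Import all_classical all_reals all_analysis.
From mathcomp Require Import measurable_realfun.
From mathcomp Require Import ring lra.
Import Order.TTheory GRing.Theory Num.Theory.
Import numFieldNormedType.Exports.
Set Implicit Arguments. Unset Strict Implicit. Unset Printing Implicit Defensive.
Local Open Scope classical_set_scope.
Local Open Scope ring_scope.

Section trig.
Variable R : realType.

Lemma sin_le_id (x : R) : 0 <= x -> sin x <= x.
Proof.
move=> x0.
have := @ger0_derive1_ndecry R (fun t => t - sin t) 0 _ _ _ 0 x (lexx _) x0.
rewrite sin0 subr0 subr_ge0; apply.
- by move=> t _; apply: derivableB => //; exact: derivable_sin.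
- move=> t _; rewrite derive1E derive_val.
  by rewrite /= subr_ge0 cos_le1.
- apply: continuous_subspaceT => t.
  apply: continuousB; [exact: cvg_id | exact: continuous_sin].
Qed.

Lemma one_minus_cos_le (x : R) : 1 - cos x <= x ^+ 2 / 2.
Proof.
wlog x0 : x / 0 <= x.
  move=> H; have [/H//|/ltW] := leP 0 x.
  by rewrite -oppr_ge0 => /H; rewrite cosN sqrrN.
have := @ger0_derive1_ndecry R (fun t => t ^+ 2 / 2 - 1 + cos t) 0 _ _ _ 0 x (lexx _) x0.
rewrite expr0n /= mul0r sub0r cos0 addNr.
move=> H; suff : 0 <= x ^+ 2 / 2 - 1 + cos x by lra.
apply: H.
- move=> t _; apply: derivableD; last exact: derivable_cos.
  apply: derivableB => //; apply: derivableM => //; exact: derivableX.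
- move=> t; rewrite in_itv /= andbT => t0; rewrite derive1E derive_val.
  rewrite !scaler0 add0r subr0 /GRing.scale /= mulr1.
  have := sin_le_id (ltW t0); lra.
- apply: derivable_within_continuous => t _.
  apply: derivableD; last exact: derivable_cos.
  apply: derivableB => //; apply: derivableM => //; exact: derivableX.
Qed.
End trig.

Section alg.
Variables (R : realType) (d : nat).
Implicit Types (x y z : 'rV[R]_d) (M : 'M[R]_d).

Lemma innerE x y : inner x y = \sum_i x 0 i * y 0 i.
Proof. by rewrite /inner !mxE; apply: eq_bigr => i _; rewrite mxE. Qed.

Lemma inner_ge0 x : 0 <= inner x x.
Proof. by rewrite innerE; apply: sumr_ge0 => i _; rewrite -expr2 sqr_ge0. Qed.

Lemma enorm_ge0 x : 0 <= enorm x.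
Proof. exact: sqrtr_ge0. Qed.

Lemma enorm2 x : enorm x ^+ 2 = inner x x.
Proof. by rewrite /enorm sqr_sqrtr // inner_ge0. Qed.

Lemma coord_le x i : `|x 0 i| <= enorm x.
Proof.
rewrite -sqrtr_sqr /enorm ler_sqrt ?inner_ge0 // innerE.
rewrite (bigD1 i) //= -expr2 lerDl.
by apply: sumr_ge0 => j _; rewrite -expr2 sqr_ge0.
Qed.

Lemma inner_le x y : `|inner x y| <= d%:R * (enorm x * enorm y).
Proof.
rewrite innerE; apply: (le_trans (ler_norm_sum _ _ _)).
rewrite mulr_natl.
have -> : (enorm x * enorm y) *+ d = \sum_(i < d) (enorm x * enorm y).
  by rewrite sumr_const card_ord.
apply: ler_sum => i _.
by rewrite normrM ler_pM // ?coord_le.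
Qed.

Lemma innerZl a x y : inner (a *: x) y = a * inner x y.
Proof. by rewrite !innerE mulr_sumr; apply: eq_bigr => i _; rewrite mxE mulrA. Qed.

Lemma innerC x y : inner x y = inner y x.
Proof. by rewrite !innerE; apply: eq_bigr => i _; rewrite mulrC. Qed.

Lemma enormZ a x : enorm (a *: x) = `|a| * enorm x.
Proof.
rewrite /enorm innerZl innerC innerZl mulrA sqrtrM ?mul_ge0 //.
by rewrite -expr2 sqrtr_sqr.
by rewrite -expr2 sqr_ge0.
Qed.

Lemma enorm_eq0 x : enorm x = 0 -> x = 0.
Proof.
move=> /eqP; rewrite /enorm sqrtr_eq0 innerE => H.
have H0 : \sum_i x 0 i * x 0 i = 0.
  by apply/eqP; rewrite eq_le H sumr_ge0 // => i _; rewrite -expr2 sqr_ge0.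
apply/rowP => i; rewrite mxE.
have Hp : forall j : 'I_d, true -> 0 <= x 0 j * x 0 j.
  by move=> j _; rewrite -expr2 sqr_ge0.
have /(_ i isT) /eqP := psumr_eq0P Hp H0.
by rewrite mulf_eq0 orbb => /eqP.
Qed.

Lemma quadE M x : quad M x = \sum_j \sum_i x 0 i * M i j * x 0 j.
Proof.
rewrite /quad !mxE; apply: eq_bigr => j _; rewrite !mxE mulr_suml.
by apply: eq_bigr => i _.
Qed.

Definition mxK M := \sum_j \sum_i `|M i j|.

Lemma mxK_ge0 M : 0 <= mxK M.
Proof. by apply: sumr_ge0 => j _; apply: sumr_ge0. Qed.

Lemma quad_le M x : `|quad M x| <= mxK M * enorm x ^+ 2.
Proof.
rewrite quadE /mxK mulr_suml; apply: (le_trans (ler_norm_sum _ _ _)).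
apply: ler_sum => j _; rewrite mulr_suml.
apply: (le_trans (ler_norm_sum _ _ _)); apply: ler_sum => i _.
rewrite !normrM expr2 [`|x 0 i| * _]mulrC -mulrA; apply: ler_wpM2l => //.
by apply: ler_pM => //; exact: coord_le.
Qed.

Lemma quadZ M a x : quad M (a *: x) = a ^+ 2 * quad M x.
Proof.
rewrite !quadE mulr_sumr; apply: eq_bigr => j _; rewrite mulr_sumr.
by apply: eq_bigr => i _; rewrite !mxE; ring.
Qed.

Definition bil M x y := (x *m M *m y^T) 0 0.

Lemma quadD M x y : quad M (x + y) = quad M x + quad M y + bil M x y + bil M y x.
Proof.
rewrite /quad /bil mulmxDl mulmxDl linearD /= !mulmxDr !mxE; ring.
Qed.

Lemma bilZl M a x y : bil M (a *: x) y = a * bil M x y.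
Proof. by rewrite /bil -!scalemxAl mxE. Qed.

Lemma quad_pd M : M^T = M -> (forall x, 0 <= quad M x) -> \det M != 0 ->
  forall x, enorm x ^+ 2 * (mxK (invmx M) + 1)^-1 <= quad M x.
Proof.
move=> MT Mge0 dM x.
have uM : M \in unitmx by rewrite unitmxE unitfE.
set Mi := invmx M; set s := (mxK Mi + 1)^-1; set y := x *m Mi.
have MiT : Mi^T = Mi by rewrite /Mi trmx_inv MT.
have K0 := mxK_ge0 Mi.
have s0 : 0 < s by rewrite invr_gt0; lra.
have sK : s * (mxK Mi + 1) = 1 by rewrite mulVf //; apply: lt0r_neq0; exact: ltr_wpDl.
have b1 : bil M x ((- s) *: y) = - s * enorm x ^+ 2.
  rewrite /bil linearZ /= -scalemxAr mxE; congr (_ * _).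
  by rewrite /y trmx_mul MiT mulmxA -(mulmxA x) mulmxV // mulmx1 enorm2.
have b2 : bil M ((- s) *: y) x = - s * enorm x ^+ 2.
  rewrite bilZl; congr (_ * _).
  by rewrite /bil /y -(mulmxA x) mulVmx // mulmx1 enorm2.
have q1 : quad M ((- s) *: y) = s ^+ 2 * quad Mi x.
  rewrite quadZ sqrrN; congr (_ * _).
  by rewrite /quad /y trmx_mul MiT -!mulmxA mulKmx.
have := Mge0 (x + (- s) *: y); rewrite quadD b1 b2 q1.
have := quad_le Mi x; rewrite ler_norml => /andP[_ hq].
have E0 : 0 <= enorm x ^+ 2 by rewrite sqr_ge0.
have h2 : s ^+ 2 * quad Mi x <= s ^+ 2 * (mxK Mi * enorm x ^+ 2).
  by apply: ler_wpM2l => //; rewrite sqr_ge0.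
have sK' : s * mxK Mi = 1 - s by rewrite -sK; ring.
have h3 : s ^+ 2 * (mxK Mi * enorm x ^+ 2) = s * enorm x ^+ 2 - s ^+ 2 * enorm x ^+ 2.
  have -> : s ^+ 2 * (mxK Mi * enorm x ^+ 2) = s * (s * mxK Mi) * enorm x ^+ 2 by ring.
  rewrite sK'; ring.
have h4 : 0 <= s ^+ 2 * enorm x ^+ 2 by rewrite mulr_ge0 // sqr_ge0.
lra.
Qed.

Lemma unit_of x : x != 0 -> exists u, enorm u = 1 /\ exists c, u = c *: x.
Proof.
move=> x0; have e0 : enorm x != 0 by apply: contra x0 => /eqP /enorm_eq0 ->.
exists ((enorm x)^-1 *: x); split; last by exists (enorm x)^-1.
rewrite enormZ ger0_norm ?invr_ge0 ?enorm_ge0 // mulVf //.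
Qed.

Lemma unit_exists : (0 < d)%N -> exists u : 'rV[R]_d, enorm u = 1.
Proof.
move=> d0; have [|u [u1 _]] := @unit_of (const_mx 1); last by exists u.
apply/eqP => /rowP /(_ (Ordinal d0)); rewrite !mxE => /eqP; rewrite oner_eq0.
by [].
Qed.

Lemma kernel_unit M : \det M = 0 -> exists v, enorm v = 1 /\ v *m M = 0.
Proof.
move=> /eqP /det0P [v v0 vM]; have [u [u1 [c uE]]] := unit_of v0.
by exists u; split => //; rewrite uE -scalemxAl vM scaler0.
Qed.

Lemma bilC M x y : M^T = M -> bil M x y = bil M y x.
Proof.
move=> MT; rewrite /bil.
have -> : y *m M *m x^T = (x *m M *m y^T)^T by rewrite !trmx_mul trmxK MT mulmxA.
by rewrite [RHS]mxE.
Qed.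

Lemma nnd_pos M : M^T = M -> (forall x, 0 <= quad M x) -> M != 0 ->
  exists u, 0 < quad M u.
Proof.
move=> MT Mge0 M0; apply: contrapT => H.
have q0 : forall u, quad M u = 0.
  move=> u; apply/eqP; rewrite eq_le Mge0 andbT leNgt; apply/negP => hu.
  by apply: H; exists u.
have b0 : forall x y, bil M x y = 0.
  move=> x y; have := quadD M x y; rewrite !q0 (bilC _ _ MT) => /eqP.
  by rewrite !add0r eq_sym -mulr2n mulrn_eq0 /= => /eqP.
move/eqP: M0; apply; apply/matrixP => i j.
have := b0 (delta_mx 0 i) (delta_mx 0 j).
by rewrite /bil -rowE trmx_delta -colE !mxE.
Qed.

End alg.

Section meas.
Variables (R : realType) (d : nat).

Lemma coord_cont (i : 'I_d) : continuous (fun y : 'rV[R]_d => y 0 i).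
Proof.
move=> z; apply/(@cvg_entourageP _ _ (fmap_filter _ (nbhs_filter z))) => A eA.
have := proj1 (@cvg_mx_entourageP R 1 d (nbhs z) (nbhs_filter z) z) (@cvg_id _ (nbhs z)) A eA.
by apply: filterS => y /(_ 0 i); rewrite inE.
Qed.

Lemma cont_meas (f : 'rV[R]_d -> R) : continuous f ->
  measurable_fun (setT : set (Rd R d)) f.
Proof.
move=> cf; apply: (measurability _ (RGenOpens.measurableE R)).
move=> _ [_ [a [b ->]] <-]; apply: sub_sigma_algebra; rewrite setTI.
move/continuousP : cf; apply.
exact: interval_open.
Qed.

Lemma coord_meas (i : 'I_d) : measurable_fun (setT : set (Rd R d)) (fun y => y 0 i).
Proof. by apply: cont_meas; exact: coord_cont. Qed.

Lemma inner_meas (z : 'rV[R]_d) : measurable_fun (setT : set (Rd R d)) (fun y => inner z y).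
Proof.
rewrite (_ : (fun y => _) = (fun y : Rd R d => \sum_(i < d) z 0 i * y 0 i)); last first.
  by apply/funext => y; rewrite /inner !mxE; apply: eq_bigr => i _; rewrite mxE.
apply: measurable_sum => i; apply: measurable_funM; first exact: measurable_cst.
exact: coord_meas.
Qed.

Lemma innerself_meas : measurable_fun (setT : set (Rd R d)) (fun y => inner y y).
Proof.
rewrite (_ : (fun y => _) = (fun y : Rd R d => \sum_(i < d) y 0 i * y 0 i)); last first.
  by apply/funext => y; rewrite /inner !mxE; apply: eq_bigr => i _; rewrite mxE.
by apply: measurable_sum => i; apply: measurable_funM; exact: coord_meas.
Qed.

Lemma cos_meas (z : 'rV[R]_d) :
  measurable_fun (setT : set (Rd R d)) (fun y => ((1 - cos (inner z y))%:E : \bar R)).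
Proof.
apply/measurable_EFinP; apply: measurable_funB; first exact: measurable_cst.
apply: measurableT_comp (inner_meas z).
apply: continuous_measurable_fun; exact: continuous_cos.
Qed.

End meas.

Section integ.
Variables (R : realType) (d : nat) (N : {measure set Rd R d -> \bar R}).

Definition FF (z : 'rV[R]_d) := (\int[N]_(y in [set: Rd R d]) (1 - cos (inner z y))%:E)%E.

Lemma FF_ge0 z : (0 <= FF z)%E.
Proof. by apply: integral_ge0 => y _; rewrite lee_fin subr_ge0 cos_le1. Qed.

Lemma FF_le z (h : Rd R d -> R) (c : R) : 0 <= c -> measurable_fun setT h ->
  (forall y, 0 <= h y) -> (forall y, 1 - cos (inner z y) <= c * h y) ->
  (FF z <= c%:E * \int[N]_(y in [set: Rd R d]) (h y)%:E)%E.
Proof.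
move=> c0 mh h0 hb.
have E : (\int[N]_(y in [set: Rd R d]) ((c * h y)%:E) =
    c%:E * \int[N]_(y in [set: Rd R d]) (h y)%:E)%E.
  rewrite -ge0_integralZl_EFin //.
  - by move=> y _; rewrite lee_fin.
  - exact/measurable_EFinP.
rewrite -E /FF.
apply: (@ge0_le_integral _ _ _ N setT measurableT).
- by move=> y _; rewrite lee_fin subr_ge0 cos_le1.
- exact: cos_meas.
- apply/measurable_EFinP; apply: measurable_funM; first exact: measurable_cst.
  exact: mh.
- by move=> y _; rewrite lee_fin hb.
Qed.

Lemma sq_inner_le (z y : 'rV[R]_d) : inner z y ^+ 2 <= d%:R ^+ 2 * enorm z ^+ 2 * enorm y ^+ 2.
Proof.
have h := inner_le z y.
rewrite -real_normK ?num_real // -mulrA -!exprMn.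
by rewrite ler_pXn2r // ?nnegrE ?mulr_ge0 ?enorm_ge0.
Qed.

Lemma cos_bound1 (z y : 'rV[R]_d) : 1 - cos (inner z y) <=
  (2 + d%:R ^+ 2 * enorm z ^+ 2) * Num.min 1 (enorm y ^+ 2).
Proof.
have hc := one_minus_cos_le (inner z y).
have hs := sq_inner_le z y.
have hz : 0 <= d%:R ^+ 2 * enorm z ^+ 2 by rewrite mulr_ge0 // sqr_ge0.
have hy : 0 <= enorm y ^+ 2 by rewrite sqr_ge0.
have := cos_geN1 (inner z y).
case: (leP 1 (enorm y ^+ 2)) => h1.
  rewrite mulr1; lra.

have : inner z y ^+ 2 <= (2 + d%:R ^+ 2 * enorm z ^+ 2) * enorm y ^+ 2.
  apply: (le_trans hs); rewrite mulrDl lerDr mulr_ge0 //.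
have := sqr_ge0 (inner z y); lra.
Qed.

Lemma cos_bound2 (z y : 'rV[R]_d) : 1 - cos (inner z y) <=
  (d%:R ^+ 2 * enorm z ^+ 2 / 2) * enorm y ^+ 2.
Proof.
have hc := one_minus_cos_le (inner z y).
have hs := sq_inner_le z y.
rewrite mulrAC; lra.
Qed.

Lemma fine_le_mul (a b : \bar R) (c : R) : (0 <= a)%E -> (a <= c%:E * b)%E ->
  0 <= c -> (0 <= b)%E -> (b < +oo)%E -> fine a <= c * fine b.
Proof.
move=> a0 ab c0 b0 boo.
have bf : b \is a fin_num by rewrite ge0_fin_numE.
move: ab; rewrite -(fineK bf) -EFinM => ab.
have af : a \is a fin_num by rewrite ge0_fin_numE // (le_lt_trans ab) ?ltry.
by move: ab; rewrite -(fineK af) lee_fin.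
Qed.


Definition II := (\int[N]_(y in [set: Rd R d]) (Num.min 1 (enorm y ^+ 2))%:E)%E.
Definition JJ := (\int[N]_(y in [set: Rd R d]) (enorm y ^+ 2)%:E)%E.

Lemma min_meas : measurable_fun (setT : set (Rd R d)) (fun y => Num.min 1 (enorm y ^+ 2)).
Proof.
rewrite (_ : (fun y => _) = (fun y : Rd R d => Num.min 1 (inner y y))); last first.
  by apply/funext => y; rewrite enorm2.
apply: measurable_minr; first exact: measurable_cst.
exact: innerself_meas.
Qed.

Lemma sq_meas : measurable_fun (setT : set (Rd R d)) (fun y => enorm y ^+ 2).
Proof.
rewrite (_ : (fun y => _) = (fun y : Rd R d => inner y y)); last first.
  by apply/funext => y; rewrite enorm2.
exact: innerself_meas.
Qed.

Lemma II_ge0 : (0 <= II)%E.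
Proof. by apply: integral_ge0 => y _; rewrite lee_fin le_min ler01 sqr_ge0. Qed.

Lemma JJ_ge0 : (0 <= JJ)%E.
Proof. by apply: integral_ge0 => y _; rewrite lee_fin sqr_ge0. Qed.

Lemma RePsi_ge (A : 'M[R]_d) z : quad A z / 2 <= RePsi A N z.
Proof. by rewrite /RePsi lerDl; apply: fine_ge0; exact: FF_ge0. Qed.

Lemma RePsi_le1 (A : 'M[R]_d) z : levy_measure N ->
  RePsi A N z <= quad A z / 2 + (2 + d%:R ^+ 2 * enorm z ^+ 2) * fine II.
Proof.
move=> [_ Ioo]; rewrite /RePsi lerD2l.
apply: fine_le_mul; first exact: FF_ge0.
- apply: FF_le; first by rewrite addr_ge0 // mulr_ge0 // sqr_ge0.
  + exact: min_meas.
  + by move=> y; rewrite le_min ler01 sqr_ge0.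
  + exact: cos_bound1.
- by rewrite addr_ge0 // mulr_ge0 // sqr_ge0.
- exact: II_ge0.
- exact: Ioo.
Qed.

Lemma RePsi_le2 (A : 'M[R]_d) z : (JJ < +oo)%E ->
  RePsi A N z <= quad A z / 2 + (d%:R ^+ 2 * enorm z ^+ 2 / 2) * fine JJ.
Proof.
move=> Joo; rewrite /RePsi lerD2l.
apply: fine_le_mul; first exact: FF_ge0.
- apply: FF_le; first by rewrite mulr_ge0 // mulr_ge0 // sqr_ge0.
  + exact: sq_meas.
  + by move=> y; rewrite sqr_ge0.
  + exact: cos_bound2.
- by rewrite mulr_ge0 // mulr_ge0 // sqr_ge0.
- exact: JJ_ge0.
- exact: Joo.
Qed.

Lemma sq_le_r (z : 'rV[R]_d) r : enorm z <= r -> enorm z ^+ 2 <= r ^+ 2.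
Proof.
move=> h; have h0 := enorm_ge0 z.
by rewrite ler_pXn2r // nnegrE // (le_trans h0 h).
Qed.

Lemma quad_le_r (A : 'M[R]_d) z r : enorm z <= r -> quad A z <= mxK A * r ^+ 2.
Proof.
move=> h; apply: (le_trans (ler_norm _)); apply: (le_trans (quad_le A z)).
by apply: ler_wpM2l; [exact: mxK_ge0 | exact: sq_le_r].
Qed.

Lemma RePsi_bnd (A : 'M[R]_d) z r : levy_measure N -> enorm z <= r ->
  RePsi A N z <= mxK A * r ^+ 2 / 2 + (2 + d%:R ^+ 2 * r ^+ 2) * fine II.
Proof.
move=> lv h; apply: (le_trans (RePsi_le1 A z lv)).
apply: lerD; first by apply: ler_wpM2r; [rewrite invr_ge0 | exact: quad_le_r].
apply: ler_wpM2r; first exact: fine_ge0 II_ge0.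
by rewrite lerD2l; apply: ler_wpM2l; [rewrite sqr_ge0|exact: sq_le_r].
Qed.

Lemma enorm0 : enorm (0 : 'rV[R]_d) = 0.
Proof. by rewrite /enorm innerE big1 ?sqrtr0 // => i _; rewrite mxE mul0r. Qed.

Lemma Psistar_ge (A : 'M[R]_d) z r : levy_measure N -> enorm z <= r ->
  RePsi A N z <= Psistar A N r.
Proof.
move=> lv h; rewrite /Psistar; apply: ub_le_sup; last by exists z.
exists (mxK A * r ^+ 2 / 2 + (2 + d%:R ^+ 2 * r ^+ 2) * fine II).
by move=> _ [z' hz' <-]; exact: RePsi_bnd.
Qed.

Lemma Psistar_le (A : 'M[R]_d) r B : 0 <= r ->
  (forall z, enorm z <= r -> RePsi A N z <= B) -> Psistar A N r <= B.
Proof.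
move=> r0 h; rewrite /Psistar; apply: ge_sup.
  by exists (RePsi A N 0), 0 => //=; rewrite enorm0.
by move=> _ [z' hz' <-]; exact: h.
Qed.

End integ.

Section main.
Variables (R : realType) (d : nat) (A : 'M[R]_d) (N : {measure set Rd R d -> \bar R}).

Lemma standing_d : standing A N -> (0 < d)%N.
Proof.
rewrite lt0n; apply: contraPT => /negPn /eqP d0.
have e0 : forall y : 'rV[R]_d, enorm y = 0.
  move=> y; rewrite /enorm innerE big1 ?sqrtr0 // => i _.
  by case: i => i hi; exfalso; move: hi; rewrite d0.
have h0 : forall r, hfun A N r = 0%E.
  move=> r; rewrite /hfun.
  have -> : opnorm A = 0.
    rewrite /opnorm (_ : [set _ | _ in _] = [set 0]) ?sup1 //.
    apply/seteqP; split => x /=.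
      by case=> z _ <-; rewrite e0.
    by move=> ->; exists 0; rewrite /= ?e0.
  rewrite mul0r add0e; apply: integral0_eq => y _.
  by rewrite e0 expr0n /= mul0r; congr (_%:E); rewrite minEle ler10.
move=> /cvgeyPger /(_ 1 (num_real _)).
move=> H; have [|r] := filter_ex H; first exact: at_right_proper_filter.
by rewrite h0 lee_fin ler10.
Qed.


Lemma C3_build (T3 : \bar R) (C lam : R) : (0 < d)%N -> (0 < T3)%E -> 0 < C -> 0 < lam ->
  levy_measure N ->
  (forall x, lam * enorm x ^+ 2 <= RePsi A N x) ->
  (forall r, gt_inv T3 r -> 0 <= r /\ Psistar A N r <= C * r ^+ 2) -> C3_with A N T3.
Proof.
move=> d0 T0 C0 l0 lv hl hC; split => //.
have [u u1] := @unit_exists R d d0.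
have Pge0 : forall r, 0 <= r -> 0 <= Psistar A N r.
  move=> r r0; have := @Psistar_ge R d N A 0 r lv; rewrite enorm0 => /(_ r0).
  by apply: le_trans; have := hl 0; rewrite enorm0 expr0n mulr0.
have hCC : C != 0 by rewrite gt_eqF.
set c3 := Num.min 1 (lam / C).
have c30 : 0 < c3 by rewrite lt_min ltr01 divr_gt0.
have hc : c3 <= lam / C by rewrite ge_min lexx orbT.
exists c3, 2; split.
- by rewrite c30 ge_min lexx.
- by rewrite ltr0n lexx.
- move=> x hx; have [r0 hP] := hC _ hx.
  apply: le_trans (hl x).
  apply: (le_trans (ler_wpM2r (Pge0 _ r0) hc)).
  apply: (le_trans (ler_wpM2l _ hP)); first by rewrite ltW // divr_gt0.
  by rewrite mulrA divfK.
- move=> l r l1 hr; have [r0 hP] := hC _ hr.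
  have l0' : 0 <= l by apply: le_trans l1.
  rewrite powR_mulrn //.
  have hz : enorm ((l * r) *: u) = l * r by rewrite enormZ u1 mulr1 ger0_norm // mulr_ge0.
  have h3 : lam * (l * r) ^+ 2 <= Psistar A N (l * r).
    have := hl ((l * r) *: u); rewrite hz => h; apply: le_trans h _.
    by apply: Psistar_ge => //; rewrite hz.
  apply: le_trans h3.
  have h1 : c3 * l ^+ 2 * Psistar A N r <= lam / C * l ^+ 2 * (C * r ^+ 2).
    apply: ler_pM.
    - by rewrite mulr_ge0 ?sqr_ge0 // ltW.
    - exact: Pge0.
    - by apply: ler_wpM2r => //; rewrite sqr_ge0.
    - exact: hP.
  have h2 : lam / C * l ^+ 2 * (C * r ^+ 2) = lam * (l * r) ^+ 2.
    by field.
  by rewrite -h2.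
Qed.


Definition lamA := (mxK (invmx A) + 1)^-1 / 2.

Lemma lamA_gt0 : 0 < lamA.
Proof.
rewrite /lamA divr_gt0 // invr_gt0; apply: ltr_wpDl => //; exact: mxK_ge0.
Qed.

Lemma lower_bound : symmetric_nnd A -> \det A != 0 ->
  forall x, lamA * enorm x ^+ 2 <= RePsi A N x.
Proof.
move=> [AT Ag] dA x; apply: le_trans (RePsi_ge N A x).
have := quad_pd AT Ag dA x; rewrite /lamA => h.
rewrite mulrAC; apply: ler_wpM2r; first by rewrite invr_ge0.
by rewrite mulrC.
Qed.

Lemma forward1 : symmetric_nnd A -> levy_measure N -> standing A N ->
  \det A != 0 -> C3 A N /\ A != 0.
Proof.
move=> sA lv st dA; have d0 := standing_d st.
split.
  exists 1%:E.
  apply: (@C3_build _ (mxK A / 2 + (2 + d%:R ^+ 2) * fine (II N) + 1) lamA) => //.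
  - have := mxK_ge0 A; have := fine_ge0 (II_ge0 N).
    have : 0 <= d%:R ^+ 2 :> R by rewrite sqr_ge0.
    move=> h1 h2 h3.
    have : 0 <= (2 + d%:R ^+ 2) * fine (II N) by rewrite mulr_ge0 // addr_ge0.
    lra.
  - exact: lamA_gt0.
  - exact: lower_bound.
  - move=> r /=; rewrite invr1 => r1.
    have r0 : 0 <= r by apply: le_trans (ltW r1); rewrite ler01.
    split => //.
    have hP : Psistar A N r <= mxK A * r ^+ 2 / 2 + (2 + d%:R ^+ 2 * r ^+ 2) * fine (II N).
      by apply: Psistar_le => // z hz; exact: RePsi_bnd.
    apply: le_trans hP _.
    have a0 := fine_ge0 (II_ge0 N).
    have q1 : 1 <= r ^+ 2 by rewrite -(expr1n _ 2) ler_pXn2r // ?nnegrE // ltW.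
    have h : fine (II N) <= r ^+ 2 * fine (II N) by rewrite ler_peMl.
    have K0 := mxK_ge0 A.
    have D0 : 0 <= d%:R ^+ 2 :> R by rewrite sqr_ge0.
    nra.
apply/eqP => A0.
have [u u1] := @unit_exists R d d0.
have := quad_pd sA.1 sA.2 dA u.
rewrite A0 /quad mulmx0 mul0mx mxE u1 expr1n mul1r => h.
have : 0 < (mxK (invmx (0 : 'M[R]_d)) + 1)^-1 by rewrite invr_gt0 ltr_wpDl // mxK_ge0.
lra.
Qed.

Lemma forward2 : symmetric_nnd A -> levy_measure N -> standing A N ->
  \det A != 0 -> (JJ N < +oo)%E -> C3_with A N +oo%E.
Proof.
move=> sA lv st dA Joo; have d0 := standing_d st.
apply: (@C3_build _ (mxK A / 2 + d%:R ^+ 2 * fine (JJ N) / 2 + 1) lamA) => //.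
- have := mxK_ge0 A; have := fine_ge0 (JJ_ge0 N).
  have : 0 <= d%:R ^+ 2 :> R by rewrite sqr_ge0.
  move=> h1 h2 h3.
  have : 0 <= d%:R ^+ 2 * fine (JJ N) by rewrite mulr_ge0.
  lra.
- exact: lamA_gt0.
- exact: lower_bound.
- move=> r /= r0; split; first exact: ltW.
  have hP : Psistar A N r <= mxK A * r ^+ 2 / 2 + (d%:R ^+ 2 * r ^+ 2 / 2) * fine (JJ N).
    apply: Psistar_le; first exact: ltW.
    move=> z hz; apply: le_trans (RePsi_le2 A z Joo) _.
    apply: lerD.
      by apply: ler_wpM2r; [rewrite invr_ge0 | exact: quad_le_r].
    apply: ler_wpM2r; first exact: fine_ge0 (JJ_ge0 N).
    apply: ler_wpM2r; first by rewrite invr_ge0.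
    by apply: ler_wpM2l; [rewrite sqr_ge0 | exact: sq_le_r].
  apply: le_trans hP _.
  have : 0 <= r ^+ 2 by rewrite sqr_ge0.
  move=> h.
  have -> : (mxK A / 2 + d%:R ^+ 2 * fine (JJ N) / 2 + 1) * r ^+ 2 =
    mxK A * r ^+ 2 / 2 + d%:R ^+ 2 * r ^+ 2 / 2 * fine (JJ N) + r ^+ 2 by ring.
  by rewrite lerDl.
Qed.

End main.

Section back.
Variables (R : realType) (d : nat) (A : 'M[R]_d) (N : {measure set Rd R d -> \bar R}).

Lemma II_lt (lv : levy_measure N) : (II N < +oo)%E.
Proof. by case: lv. Qed.

Lemma FF_fin z : levy_measure N -> FF N z \is a fin_num.
Proof.
move=> lv; rewrite ge0_fin_numE ?FF_ge0 //.
have c0 : 0 <= 2 + d%:R ^+ 2 * enorm z ^+ 2 by rewrite addr_ge0 // mulr_ge0 // sqr_ge0.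
apply: (le_lt_trans (FF_le N c0 (@min_meas R d) _ (cos_bound1 z))).
  by move=> y; rewrite le_min ler01 sqr_ge0.
have If : II N \is a fin_num by rewrite ge0_fin_numE ?II_ge0 ?II_lt.
by rewrite -/(II N) -(fineK If) -EFinM ltry.
Qed.

Lemma quad0 : quad A 0 = 0.
Proof. by rewrite /quad !mul0mx mxE. Qed.


Lemma ev_gt_inv (T3 : \bar R) : (0 < T3)%E ->
  \forall n \near \oo, gt_inv T3 (n.+1%:R : R).
Proof.
case: T3 => [t3 | | ] //= T0.
  rewrite lte_fin in T0.
  apply: filterS (nbhs_infty_gtr (t3^-1)) => n hn.
  by apply: lt_le_trans hn _; rewrite ler_nat.
by apply: nearW => n; rewrite ltr0Sn.
Qed.

Lemma seq_cvg0 (v y : 'rV[R]_d) :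
  (fun n => ((1 - cos (inner (n.+1%:R *: v) y)) * (n.+1%:R ^+ 2)^-1)%:E) @ \oo --> 0%E.
Proof.
apply: cvg_EFin; first exact: nearW.
apply/cvgr0Pnorm_lt => e e0.
apply: filterS (nbhs_infty_gtr (2 / e)) => n hn /=.
set T : R := n.+1%:R.
have T1 : 1 <= T by rewrite /T ler1n.
have T2 : 0 < T ^+ 2 by rewrite exprn_gt0 // (lt_le_trans ltr01 T1).
have c1 := cos_le1 (inner (T *: v) y).
have c2 := cos_geN1 (inner (T *: v) y).
rewrite ger0_norm; last by rewrite mulr_ge0 // ?invr_ge0 ?ltW // subr_ge0.
rewrite ltr_pdivrMr //.
have hT : 2 < e * T.
  have : (2 / e < T) by apply: lt_le_trans hn _; rewrite /T ler_nat.
  by rewrite ltr_pdivrMr // mulrC.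
have hT2 : e * T <= e * T ^+ 2.
  by apply: ler_wpM2l; [exact: ltW | rewrite expr2 ler_peMl // (le_trans ler01 T1)].
lra.
Qed.


Lemma backward : symmetric_nnd A -> levy_measure N -> C3 A N -> A != 0 -> \det A != 0.
Proof.
move=> [AT Ag] lv [T3 [T0 [c3 [a3 [/andP[c30 _] _ h1 _]]]]] A0.
apply/eqP => dA.
have [v [v1 vA]] := kernel_unit dA.
have qv : quad A v = 0 by rewrite /quad vA mul0mx mxE.
have [u0 qu0] := nnd_pos AT Ag A0.
have u00 : u0 != 0 by apply: contraTneq qu0 => ->; rewrite quad0 ltxx.
have [u [u1 [c uE]]] := unit_of u00.
have c0 : c != 0.
  apply/eqP => c0; move: u1; rewrite uE c0 scale0r enorm0 => /eqP.
  by rewrite eq_sym oner_eq0.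
have qu : 0 < quad A u by rewrite uE quadZ mulr_gt0 // lt_def sqr_ge0 andbT expf_neq0.
set q := quad A u.
pose t (n : nat) : R := n.+1%:R.
have t0 : forall n, 0 < t n by move=> n; rewrite ltr0Sn.
have key : forall n, gt_inv T3 (t n) ->
    c3 * (t n ^+ 2 * q / 2) <= fine (FF N (t n *: v)).
  move=> n hn.
  have hx : enorm (t n *: v) = t n by rewrite enormZ v1 mulr1 ger0_norm ?ltW.
  have H := h1 (t n *: v); rewrite hx in H; have H' := H hn.
  have RE : RePsi A N (t n *: v) = fine (FF N (t n *: v)).
    by rewrite /RePsi quadZ qv mulr0 mul0r add0r.
  rewrite -RE; apply: le_trans _ H'.
  apply: ler_wpM2l; first exact: ltW.
  have hz : enorm (t n *: u) = t n by rewrite enormZ u1 mulr1 ger0_norm ?ltW.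
  have := RePsi_ge N A (t n *: u); rewrite quadZ -/q => h; apply: le_trans h _.
  by apply: Psistar_ge => //; rewrite hz.
pose g_ := fun n (y : Rd R d) => ((1 - cos (inner (t n *: v) y)) * (t n ^+ 2)^-1)%:E.
pose G := fun y : Rd R d => ((2 + d%:R ^+ 2) * Num.min 1 (enorm y ^+ 2))%:E.
have mg : forall n, measurable_fun setT (g_ n).
  move=> n; apply/measurable_EFinP; apply: measurable_funM; last exact: measurable_cst.
  by have /measurable_EFinP := cos_meas (t n *: v).
have iG : N.-integrable setT G.
  apply/integrableP; split.
    apply/measurable_EFinP; apply: measurable_funM; [exact: measurable_cst | exact: min_meas].
  have c0' : 0 <= 2 + d%:R ^+ 2 :> R by rewrite addr_ge0 // sqr_ge0.
  have -> : (\int[N]_(y in setT) `|G y|)%E = ((2 + d%:R ^+ 2)%:E * II N)%E.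
    rewrite -ge0_integralZl_EFin //.
    - apply: eq_integral => y _; rewrite /G gee0_abs ?EFinM // lee_fin mulr_ge0 //.
      by rewrite le_min ler01 sqr_ge0.
    - by move=> y _; rewrite lee_fin le_min ler01 sqr_ge0.
    - by apply/measurable_EFinP; exact: min_meas.
  have If : II N \is a fin_num by rewrite ge0_fin_numE ?II_ge0 ?II_lt.
  by rewrite -(fineK If) -EFinM ltry.
have gG : forall n y, (`|g_ n y| <= G y)%E.
  move=> n y; rewrite /g_ /G gee0_abs; last first.
    by rewrite lee_fin mulr_ge0 // ?invr_ge0 ?sqr_ge0 // subr_ge0 cos_le1.
  rewrite lee_fin.
  have hx : enorm (t n *: v) = t n by rewrite enormZ v1 mulr1 ger0_norm ?ltW.
  have := cos_bound1 (t n *: v) y; rewrite hx.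
  have T1 : 1 <= t n by rewrite /t ler1n.
  have T2 : 1 <= t n ^+ 2 by rewrite expr_ge1 // (le_trans ler01 T1).
  have T20 : 0 < t n ^+ 2 by apply: lt_le_trans T2.
  rewrite ler_pdivrMr //.
  set m := Num.min 1 (enorm y ^+ 2).
  have m0 : 0 <= m by rewrite le_min ler01 sqr_ge0.
  have D0 : 0 <= d%:R ^+ 2 :> R by rewrite sqr_ge0.
  have hm : m <= m * t n ^+ 2 by rewrite ler_peMr.
  move=> h; apply: le_trans h _.
  nra.
have [_ _] := dominated_convergence measurableT mg (measurable_cst (0%E : \bar R))
  (aeW _ (fun (y : Rd R d) _ => seq_cvg0 v y)) iG (aeW _ (fun (y : Rd R d) n _ => gG n y)).
rewrite integral0 => hcv.
have intE : forall n, (\int[N]_(y in setT) g_ n y =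
    (fine (FF N (t n *: v)) / t n ^+ 2)%:E)%E.
  move=> n; rewrite /g_.
  under eq_integral do rewrite EFinM.
  rewrite (@ge0_integralZr _ _ _ N setT measurableT
    (fun y => (1 - cos (inner (t n *: v) y))%:E) (cos_meas _)); last 2 first.
  - by move=> y _; rewrite lee_fin subr_ge0 cos_le1.
  - by rewrite lee_fin invr_ge0 sqr_ge0.
  by rewrite -/(FF N (t n *: v)) -(fineK (FF_fin _ lv)) -EFinM.
have hf : (fun n => fine (FF N (t n *: v)) / t n ^+ 2) @ \oo --> 0.
  move: hcv; rewrite (_ : [sequence _]_n = fun n => (fine (FF N (t n *: v)) / t n ^+ 2)%:E).
    by move/fine_cvgP => [_ hf].
  by apply/funext => n; rewrite /= intE.
have e0 : 0 < c3 * q / 2 by rewrite divr_gt0 // mulr_gt0.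
have := proj1 (cvgr0Pnorm_lt _) hf _ e0.
move=> H0; have H := H0 eventually_filter.
have [n [hn1 hn2]] := filter_ex (filterI (ev_gt_inv T0) H).
have k := key n hn1.
move: hn2; rewrite /t -/(t n).
have tn := t0 n.
have t2 : 0 < t n ^+ 2 by rewrite exprn_gt0.
move=> /(le_lt_trans (ler_norm _)); rewrite ltr_pdivrMr //.
have : c3 * (t n ^+ 2 * q / 2) = c3 * q / 2 * t n ^+ 2 by ring.
lra.
Qed.

End back.

Theorem lemma4p1 (R : realType) (d : nat) (A : 'M[R]_d)
    (N : {measure set Rd R d -> \bar R}) (b : 'rV[R]_d) :
  symmetric_nnd A -> levy_measure N -> standing A N ->
  ((\det A != 0) <-> (C3 A N /\ A != 0)) /\
  (\det A != 0 ->
   (\int[N]_(y in [set: Rd R d]) ((enorm y) ^+ 2)%:E < +oo)%E ->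
   C3_with A N +oo%E).
Proof.
move=> sA lv st; split.
  split; first by move=> dA; exact: (forward1 sA lv st dA).
  by case=> c3 A0; exact: (backward sA lv c3 A0).
by move=> dA J; exact: (forward2 sA lv st dA J).
Qed.
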